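(* Let $n \ge 1$, $1 \le i \le n+1$ and $k \ge 0$ be integers. The number of rooted trees on the vertex set $[n+1]=\{1,\ldots,n+1\}$ whose root is $i$ and in which exactly $k$ children of the root are smaller than $i$ equals (as an identity of rational numbers) $$\binom{i-1}{k}\,\big[(k+1)(n+1)-i\big]\,n^{\,i-k-2}\,(n+1)^{\,n-i}.$$
   Context: A rooted tree on a vertex set $V$ is a tree with vertex set $V$ together with a distinguished vertex (the root); the children of the root are the vertices adjacent to it. Vertices are compared by their integer labels. Exponents may be negative, in which case the powers are interpreted as rational numbers. *)

(* Defs.v *)
From mathcomp Require Import all_boot all_order all_algebra.
Set Implicit Arguments. Unset Strict Implicit. Unset Printing Implicit Defensive.
Import Order.TTheory GRing.Theory Num.Theory.

(* Vertex set [N] = {1,...,N} is represented by 'I_N : the ordinal v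
   stands for the label (val v).+1; label order = ordinal order. *)

Definition simple_graph N (E : {set {set 'I_N}}) : bool :=
  [forall e in E, #|e| == 2].

Definition adj N (E : {set {set 'I_N}}) : rel 'I_N :=
  fun x y => (x != y) && ([set x; y] \in E).

Definition connectedb N (E : {set {set 'I_N}}) : bool :=
  [forall x, forall y, connect (adj E) x y].

(* E contains a cycle: a closed walk through m >= 3 pairwise distinct
   vertices (any such cycle has m <= N). *)
Definition has_cycle N (E : {set {set 'I_N}}) : bool :=
  [exists m : 'I_N.+1, exists c : m.-tuple 'I_N,
     [&& 2 < m, uniq c & cycle (adj E) c]].

Definition is_tree N (E : {set {set 'I_N}}) : bool :=
  [&& simple_graph E, connectedb E & ~~ has_cycle E].

Definition small_children N (E : {set {set 'I_N}}) (r : 'I_N) : nat :=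
  #|[set v | adj E r v & v < r]|.

(* Main.v *)
Require Import Defs.
From mathcomp Require Import all_boot all_order all_algebra.
From mathcomp Require Import zify ring.
Set Implicit Arguments. Unset Strict Implicit. Unset Printing Implicit Defensive.
Import Order.TTheory GRing.Theory Num.Theory.

Lemma S1 a x : \sum_(j < a.+1) 'C(a, j) * x ^ (a - j) = (x + 1) ^ a.
Proof.
rewrite expnDn; apply: eq_bigr => j _; by rewrite exp1n muln1.
Qed.

Lemma S2 a x : \sum_(j < a.+1) j * 'C(a, j) * x ^ (a - j) = a * (x + 1) ^ a.-1.
Proof.
case: a => [|a]; first by rewrite big_ord_recl big_ord0.
rewrite big_ord_recl /= mul0n add0n -S1 big_distrr /=.
apply: eq_bigr => j _.
by rewrite /bump /= add1n -mul_bin_diag /= subSS mulnA.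
Qed.

Definition Fc (u w : nat) : nat := if w == 0 then 1 else u * (u + w) ^ w.-1.

Lemma Fc_rec u w : 0 < u -> 0 < w ->
  \sum_(t < w.+1) 'C(w, t) * Fc (u.-1 + t) (w - t) = Fc u w.
Proof.
move=> u0 w0.
set x := u.-1 + w.
have x0 : 0 < x by rewrite /x; lia.
apply/eqP; rewrite -(eqn_pmul2r x0); apply/eqP.
rewrite big_distrl /=.
transitivity (\sum_(t < w.+1) ('C(w, t) * u.-1 * x ^ (w - t) + t * 'C(w, t) * x ^ (w - t))).
  apply: eq_bigr => [[t /= ht]] _.
  rewrite /Fc; case: eqP => [e|ne].
    have -> : t = w by lia.
    rewrite subnn expn0 /x; lia.
  have -> : u.-1 + t + (w - t) = x by rewrite /x; lia.
  have -> : w - t = (w - t).-1.+1 by lia.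
  rewrite expnS; set y := x ^ _; nia.
rewrite big_split /=.
have -> : \sum_(i < w.+1) 'C(w, i) * u.-1 * x ^ (w - i) = u.-1 * \sum_(i < w.+1) 'C(w, i) * x ^ (w - i).
  rewrite big_distrr; apply: eq_bigr => i _ /=; lia.
rewrite S1 S2 /Fc.
have -> : x + 1 = u + w by rewrite /x; lia.
case: eqP => [|_]; first lia.
have -> : (u + w) ^ w = (u + w) * (u + w) ^ w.-1 by rewrite -expnS; congr (_ ^ _); lia.
set P := (u + w) ^ w.-1.
rewrite /x; nia.
Qed.


Section Funs.
Variable T : finType.

Definition reach (p : {ffun T -> T}) (U : {set T}) (w : T) : bool :=
  [exists u in U, fconnect p w u].

Lemma reachP (p : {ffun T -> T}) (U : {set T}) (w : T) : reflect (exists n, iter n p w \in U) (reach p U w).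
Proof.
apply: (iffP existsP) => [[u /andP[uU c]]|[n hn]].
  by exists (findex p w u); rewrite iter_findex.
by exists (iter n p w); rewrite hn fconnect_iter.
Qed.

Definition good (U W : {set T}) (p : {ffun T -> T}) : bool :=
  [forall v, (v \notin W) ==> (p v == v)] &&
  [forall w in W, (p w \in U :|: W) && reach p U w].

Definition Fun U W := [set p | good U W p].

Lemma inFun (U W : {set T}) p : (p \in Fun U W) = good U W p.
Proof. by rewrite inE. Qed.

Lemma goodP (U W : {set T}) (p : {ffun T -> T}) : reflect
  [/\ forall v, v \notin W -> p v = v,
      forall w, w \in W -> p w \in U :|: W &
      forall w, w \in W -> exists n, iter n p w \in U] (good U W p).
Proof.
apply: (iffP andP) => [[/forallP h1 /forallP h2]|[h1 h2 h3]].
  split=> [v vW|w wW|w wW].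
  - by move: (h1 v); rewrite vW => /eqP.
  - by move: (h2 w); rewrite wW => /andP[].
  - by move: (h2 w); rewrite wW => /andP[_ /reachP].
split; apply/forallP => v; first by apply/implyP => /h1 ->.
by apply/implyP => vW; rewrite h2 //=; apply/reachP/h3.
Qed.

Definition fib (W : {set T}) x (p : {ffun T -> T}) := [set w in W | p w == x].

Lemma fib_card (U W : {set T}) (x : T) (S : {set T}) : [disjoint U & W] -> x \in U -> S \subset W ->
  #|[set p in Fun U W | fib W x p == S]| = #|Fun ((U :\ x) :|: S) (W :\: S)|.
Proof.
move=> dUW xU SW.
have UWf v : v \in U -> v \in W -> False.
  by move=> vU vW; move/disjointFr: dUW => /(_ v vU); rewrite vW.
have xW : x \notin W by apply/negP => /(UWf x xU).
pose g (q : {ffun T -> T}) := [ffun v => if v \in S then x else q v].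
rewrite -[in RHS](@card_in_imset _ _ g); last first.
  move=> q1 q2 q1in q2in e; move: q1in q2in. rewrite !inFun => /goodP[h1 _ _] /goodP[h1' _ _].
  apply/ffunP => v; case vS: (v \in S).
    by rewrite h1 ?h1' // inE vS.
  by move/ffunP: e => /(_ v); rewrite !ffunE vS.
apply: eq_card => p; rewrite [in LHS]inE inFun; apply/andP/imsetP.
- move=> [/goodP[h1 h2 h3] /eqP fS].
  have pS v : v \in S -> p v = x.
    by move=> vS; move: vS; rewrite -fS inE => /andP[_ /eqP].
  have pnS w : w \in W -> w \notin S -> p w != x.
    by move=> wW wS; apply: contra wS => e; rewrite -fS inE wW e.
  exists [ffun v => if v \in S then v else p v]; last first.
    apply/ffunP => v; rewrite !ffunE; case vS: (v \in S); [exact: pS | by []].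
  rewrite inFun; apply/goodP; split.
  - move=> v; rewrite ffunE inE negb_and negbK; case: ifP => // _ /= vW.
    exact: h1.
  - move=> w; rewrite ffunE inE => /andP[wS wW]; rewrite (negbTE wS).
    have := h2 w wW; rewrite !inE => /orP[->|->]; last first.
      by case: (p w \in S); rewrite ?orbT.
    by rewrite (negbTE (pnS w wW wS)).
  - move=> w; rewrite inE => /andP[wS wW].
    have [n hn] := h3 w wW.
    have key : forall n w, w \in (U :\ x) :|: W -> iter n p w \in U ->
        exists m, iter m [ffun v => if v \in S then v else p v] w \in (U :\ x) :|: S.
      elim=> [|k IH] w0 w0in.
        move=> /= w0U; exists 0 => /=.
        move: w0in; rewrite !inE => /orP[/andP[-> ->]//|w0W].
        by case: (UWf _ w0U w0W).
      rewrite iterSr => hk.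
      case w0S: (w0 \in S); first by exists 0; rewrite /= inE w0S orbT.
      move: w0in; rewrite !inE => /orP[/andP[w0x w0U]|w0W]; first by exists 0; rewrite /= !inE w0x w0U.
      have p0in : p w0 \in (U :\ x) :|: W.
        have := h2 w0 w0W; rewrite !inE => /orP[->|->]; last by rewrite orbT.
        by rewrite (pnS w0 w0W (negbT w0S)).
      have [m hm] := IH _ p0in hk.
      by exists m.+1; rewrite iterSr ffunE w0S.
    by apply: key hn; rewrite inE wW orbT.
- move=> [q]; rewrite inFun => /goodP[h1 h2 h3] ->.
  have qS v : v \in S -> q v = v by move=> vS; apply: h1; rewrite inE vS.
  split; last first.
    apply/eqP/setP => w; rewrite !inE ffunE.
    case wS: (w \in S); first by rewrite eqxx andbT (subsetP SW).
    apply/negP => /andP[wW /eqP qx].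
    have : w \in W :\: S by rewrite inE wS.
    move/h2; rewrite qx !inE eqxx /= => /orP[xS|/andP[_ xW']]; last by rewrite xW' in xW.
    by move: (subsetP SW x xS); rewrite (negbTE xW).
  apply/goodP; split.
  - move=> v vW; rewrite ffunE; case: ifP => [vS|_].
      by move: (subsetP SW v vS); rewrite (negbTE vW).
    by apply: h1; rewrite inE negb_and vW orbT.
  - move=> w wW; rewrite ffunE; case: ifP => wS; first by rewrite inE xU.
    have := h2 w; rewrite inE wS wW => /(_ isT); rewrite !inE.
    by case/orP => [/orP[/andP[_ ->]//|/(subsetP SW) ->]|/andP[_ ->]]; rewrite orbT.
  - move=> w wW.
    case wS: (w \in S); first by exists 1; rewrite /= ffunE wS.
    have wW' : w \in W :\: S by rewrite inE wS.
    have [n hn] := h3 w wW'.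
    have key : forall n w, w \in (U :\ x) :|: S :|: (W :\: S) ->
        iter n q w \in (U :\ x) :|: S ->
        exists m, iter m (g q) w \in U.
      elim=> [|k IH] w0 w0in.
        rewrite /= !inE => /orP[/andP[_ w0U]|w0S]; first by exists 0.
        by exists 1; rewrite /= ffunE w0S.
      rewrite iterSr => hk.
      move: w0in; rewrite !inE => /orP[/orP[/andP[_ w0U]|w0S]|/andP[w0S w0W]].
      + by exists 0.
      + by exists 1; rewrite /= ffunE w0S.
      have w0W' : w0 \in W :\: S by rewrite inE w0S.
      have q0in : q w0 \in (U :\ x) :|: S :|: (W :\: S).
        by have := h2 w0 w0W'; rewrite !inE.
      have [m hm] := IH _ q0in hk.
      by exists m.+1; rewrite iterSr ffunE (negbTE w0S).
    by apply: key hn; rewrite inE wW' orbT.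
Qed.


Lemma card_Fun_rec (U W : {set T}) x : [disjoint U & W] -> x \in U ->
  #|Fun U W| = \sum_(S in powerset W) #|Fun ((U :\ x) :|: S) (W :\: S)|.
Proof.
move=> dUW xU.
rewrite -sum1_card (partition_big (fib W x) (mem (powerset W))) /=; last first.
  by move=> p _; rewrite powersetE; apply/subsetP => w; rewrite inE => /andP[].
apply: eq_bigr => S; rewrite powersetE => SW.
rewrite -(fib_card dUW xU SW) sum1dep_card; apply: eq_card => p.
by rewrite !inE.
Qed.

Lemma sum_powerset (W : {set T}) (h : nat -> nat) :
  \sum_(S in powerset W) h #|S| = \sum_(t < #|W|.+1) 'C(#|W|, t) * h t.
Proof.
rewrite (partition_big (fun S : {set T} => (inord #|S| : 'I_#|W|.+1)) xpredT) //=.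
apply: eq_bigr => t _.
rewrite (eq_bigr (fun _ => h t)); last first.
  move=> S /andP[SW /eqP <-]; rewrite inordK // ltnS subset_leq_card //.
  by rewrite -powersetE.
rewrite sum_nat_const -cards_draws; congr (_ * _).
apply: eq_card => S; rewrite [in RHS]inE unfold_in powersetE; case SW: (S \subset W) => //=.
apply/eqP/eqP => [<-|e]; first by rewrite inordK // ltnS subset_leq_card.
by apply: val_inj; rewrite /= inordK // ltnS subset_leq_card.
Qed.

Lemma disj_intro (A B : {set T}) : (forall v, v \in A -> v \in B -> False) -> [disjoint A & B].
Proof.
move=> h; rewrite disjoint_subset; apply/subsetP => v vA; rewrite inE.
by apply/negP => /(h v vA).
Qed.

Lemma Fun_W0 (U : {set T}) : Fun U set0 = [set [ffun v => v]].
Proof.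
apply/setP => p; rewrite inFun inE; apply/goodP/eqP.
  move=> [h1 _ _]; apply/ffunP => v; rewrite ffunE; apply: h1; by rewrite inE.
move=> ->; split=> [v _|w|w]; rewrite ?ffunE // inE //.
Qed.

Lemma Fun_U0 (W : {set T}) : W != set0 -> Fun set0 W = set0.
Proof.
case/set0Pn => w wW; apply/setP => p; rewrite inFun inE.
apply/negP => /goodP[_ _ /(_ w wW)[n]]; by rewrite inE.
Qed.

Lemma card_Fun_aux n (U W : {set T}) : #|U| + #|W| <= n -> [disjoint U & W] ->
  #|Fun U W| = Fc #|U| #|W|.
Proof.
elim: n U W => [|n IH] U W hn dUW.
  have /eqP W0 : W == set0 by rewrite -cards_eq0; lia.
  by rewrite W0 Fun_W0 cards1 cards0.
have [W0|Wn0] := eqVneq W set0; first by rewrite W0 Fun_W0 cards1 cards0.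
have [U0|Un0] := eqVneq U set0.
  rewrite U0 Fun_U0 // cards0 /Fc.
  by move: Wn0; rewrite -cards_eq0 => /negbTE ->; rewrite cards0 mul0n.
have [x xU] := set0Pn _ Un0.
have UWf v : v \in U -> v \in W -> False.
  by move=> vU vW; move/disjointFr: dUW => /(_ v vU); rewrite vW.
rewrite (card_Fun_rec dUW xU).
have cU : #|U| = (#|U|.-1).+1 by move: Un0; rewrite -card_gt0; lia.
transitivity (\sum_(S in powerset W) Fc (#|U|.-1 + #|S|) (#|W| - #|S|)).
  apply: eq_bigr => S; rewrite powersetE => SW.
  have c1 : #|U :\ x :|: S| = #|U|.-1 + #|S|.
    rewrite cardsU.
    have -> : (U :\ x) :&: S = set0.
      apply/setP => v; rewrite !inE; apply/negP => /andP[/andP[_ vU] vS].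
      exact: (UWf v vU (subsetP SW v vS)).
    rewrite cards0 subn0; congr (_ + _).
    by move: (cardsD1 x U); rewrite xU; lia.
  have c2 : #|W :\: S| = #|W| - #|S| by rewrite cardsD (setIidPr SW).
  rewrite IH ?c1 ?c2 //.
    have : #|S| <= #|W| by apply: subset_leq_card.
    lia.
  apply: disj_intro => v; rewrite !inE => /orP[/andP[_ vU]|vS] /andP[vS' vW].
    exact: (UWf v vU vW).
  by rewrite vS in vS'.
rewrite (sum_powerset W (fun s => Fc (#|U|.-1 + s) (#|W| - s))).
apply: Fc_rec; first lia.
by rewrite card_gt0.
Qed.

Lemma card_Fun (U W : {set T}) : [disjoint U & W] -> #|Fun U W| = Fc #|U| #|W|.
Proof. by apply: card_Fun_aux. Qed.

End Funs.

Section Trees.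
Variable N : nat.
Notation V := ('I_N).
Implicit Types (p q : {ffun V -> V}) (E F : {set {set V}}) (r : V).

Definition rooted r p := good [set r] (~: [set r]) p.

Lemma rootedP r p : reflect (p r = r /\ forall v, exists n, iter n p v = r) (rooted r p).
Proof.
apply: (iffP (goodP _ _ _)) => [[h1 h2 h3]|[h1 h3]].
  split; first by apply: h1; rewrite !inE negbK.
  move=> v; case: (eqVneq v r) => [->|vr]; first by exists 0.
  have /h3 [n] : v \in ~: [set r] by rewrite !inE.
  by rewrite inE => /eqP; exists n.
split.
- by move=> v; rewrite !inE negbK => /eqP ->.
- by move=> w _; rewrite setUCr inE.
- by move=> w _; have [n hn] := h3 w; exists n; rewrite hn inE.
Qed.

Lemma iter_fix p r n : p r = r -> iter n p r = r.
Proof. by move=> h; elim: n => //= n ->. Qed.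

Lemma periodic_root r p v m : rooted r p -> iter m.+1 p v = v -> v = r.
Proof.
move=> /rootedP[pr hr] hv.
have [n hn] := hr v.
have hk k : iter (k * m.+1) p v = v.
  elim: k => [|k IH] //; by rewrite mulSn iterD IH hv.
rewrite -(hk n).
have -> : n * m.+1 = (n * m.+1 - n) + n by nia.
by rewrite iterD hn iter_fix.
Qed.

Lemma set2_eq (a b c d : V) : [set a; b] = [set c; d] ->
  (a = c /\ b = d) \/ (a = d /\ b = c).
Proof.
move=> e.
have ha : a \in [set c; d] by rewrite -e !inE eqxx.
have hb : b \in [set c; d] by rewrite -e !inE eqxx orbT.
have hc : c \in [set a; b] by rewrite e !inE eqxx.
have hd : d \in [set a; b] by rewrite e !inE eqxx orbT.
move: ha hb hc hd; rewrite !inE.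
case/orP=> /eqP ->; case/orP => /eqP ->; try by [left|right].
- by move=> _ /orP[] /eqP ->; [left|left].
- by move=> /orP[] /eqP -> _; [right|right].
Qed.

Definition Ep p r := [set [set v; p v] | v in ~: [set r]].

Lemma adj_Ep p r a b : adj (Ep p r) a b =
  (a != b) && (((a != r) && (b == p a)) || ((b != r) && (a == p b))).
Proof.
rewrite /adj; case: (eqVneq a b) => //= ab.
apply/imsetP/idP => [[v]|].
  rewrite !inE => vr /set2_eq[[e1 e2]|[e1 e2]]; subst a b; first by rewrite vr eqxx.
  by rewrite vr eqxx orbT.
case/orP => /andP[ar /eqP ->]; first by exists a; rewrite // !inE.
by exists b; [rewrite !inE | rewrite setUC].
Qed.


Lemma fconP p v w : reflect (exists n, iter n p v = w) (fconnect p v w).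
Proof.
apply: (iffP idP) => [h|[n <-]]; last exact: fconnect_iter.
by exists (findex p v w); rewrite iter_findex.
Qed.

Lemma fconnect_step p v w : fconnect p v w = (w == v) || fconnect p (p v) w.
Proof.
apply/fconP/orP => [[[|n] hn]|[/eqP ->|/fconP[n hn]]].
- by left; rewrite -hn.
- by right; apply/fconP; exists n; rewrite -iterSr.
- by exists 0.
- by exists n.+1; rewrite iterSr.
Qed.

Definition depth p v := #|[set w | fconnect p v w]|.

Lemma depth_step r p v : rooted r p -> v != r -> depth p (p v) < depth p v.
Proof.
move=> rp vr; rewrite /depth.
have -> : [set w | fconnect p v w] = v |: [set w | fconnect p (p v) w].
  by apply/setP => w; rewrite !inE fconnect_step.
rewrite cardsU1 inE.
case: (boolP (fconnect p (p v) v)) => // /fconP[n hn].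
have : iter n.+1 p v = v by rewrite iterSr.
by move/(periodic_root rp)/eqP; rewrite (negbTE vr).
Qed.

Lemma cycle_nbrs (e : rel V) (c : seq V) x : uniq c -> cycle e c -> 2 < size c ->
  x \in c -> exists y z, [/\ y \in c, z \in c, y != z, e x y & e z x].
Proof.
move=> uc cc sc xc; case: (rot_to xc) => i s hrot.
have us : uniq (x :: s) by rewrite -hrot rot_uniq.
have cs : cycle e (x :: s) by rewrite -hrot rot_cycle.
have ss : size (x :: s) = size c by rewrite -hrot size_rot.
have memc w : w \in x :: s -> w \in c by rewrite -hrot mem_rot.
case: s hrot us cs ss memc => [|y [|z0 s']] //= hrot us cs ss memc; first by rewrite -ss in sc.
  by rewrite -ss in sc.
exists y, (last z0 s'); split.
- by apply: memc; rewrite !inE eqxx orbT.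
- by apply: memc; rewrite inE; apply/orP; right; apply: (mem_last y (z0 :: s')).
- apply/eqP => eyz; move: us; rewrite /= => /and3P[_ /negP hy _].
  apply: hy; rewrite eyz; apply: (mem_last z0 s').
- by move: cs => /andP[].
- by move: cs => /and3P[_ _]; rewrite rcons_path => /andP[].
Qed.

Lemma Ep_tree r p : rooted r p -> is_tree (Ep p r).
Proof.
move=> rp; have [pr hr] := rootedP _ _ rp.
apply/and3P; split.
- apply/forallP => e; apply/implyP => /imsetP[v]; rewrite !inE => vr ->.
  rewrite cards2; case: (eqVneq v (p v)) => // e1.
  have : iter 1 p v = v by rewrite /= -e1.
  by move/(periodic_root rp)/eqP; rewrite (negbTE vr).
- have sym : symmetric (adj (Ep p r)).
    by move=> a b; rewrite /adj eq_sym setUC.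
  have toR v : connect (adj (Ep p r)) v r.
    have [n hn] := hr v; elim: n v hn => [|n IH] v hn; first by rewrite -hn connect0.
    case: (eqVneq v r) => [->|vr]; first exact: connect0.
    apply: (connect_trans (y := p v)); last by apply: IH; rewrite -iterSr.
    apply: connect1; rewrite adj_Ep vr eqxx /= andbT.
    apply/eqP => e1; have : iter 1 p v = v by rewrite /= -e1.
    by move/(periodic_root rp)/eqP; rewrite (negbTE vr).
  apply/forallP => x; apply/forallP => y.
  apply: (connect_trans (toR x)); rewrite (sym_connect_sym sym); exact: toR.
- apply/negP => /existsP[m /existsP[c /and3P[m2 uc cc]]].
  have sc : 2 < size c by rewrite size_tuple.
  have m0 : 0 < m by apply: leq_trans m2.
  have x0c : tnth c (Ordinal m0) \in c by apply: mem_tnth.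
  case: (@arg_maxnP _ (tnth c (Ordinal m0)) (mem c) (depth p) x0c) => x xc xmax.
  have [y [z [yc zc yz exy ezx]]] := cycle_nbrs uc cc sc xc.
  move: exy ezx; rewrite !adj_Ep => /andP[_ /orP[/andP[_ /eqP ey]|/andP[yr /eqP ex]]];
    last first.
    by have := xmax y yc; have := depth_step rp yr; rewrite -ex; lia.
  move=> /andP[_ /orP[/andP[zr /eqP ex]|/andP[_ /eqP ez]]].
    by have := xmax z zc; have := depth_step rp zr; rewrite -ex; lia.
  by rewrite ey ez eqxx in yz.
Qed.


Lemma Ep_inj r p q : rooted r p -> rooted r q -> Ep p r = Ep q r -> p = q.
Proof.
move=> rp rq e; have [pr _] := rootedP _ _ rp; have [qr hq] := rootedP _ _ rq.
apply/ffunP => v; have [n hn] := hq v.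
elim: n v hn => [|n IH] v hn; first by rewrite /= in hn; rewrite hn pr qr.
rewrite iterSr in hn; have IHv := IH _ hn.
case: (eqVneq v r) => [->|vr]; first by rewrite pr qr.
have : [set v; q v] \in Ep p r by rewrite e; apply/imsetP; exists v; rewrite // !inE.
case/imsetP => u; rewrite !inE => ur /set2_eq[[e1 e2]|[e1 e2]].
  by rewrite e2 e1.
have : iter 2 q v = v by rewrite /= -IHv e2 -e1.
by move/(periodic_root rq)/eqP; rewrite (negbTE vr).
Qed.

Lemma adj_sub E F : F \subset E -> subrel (adj F) (adj E).
Proof. by move=> FE a b /andP[ab h]; rewrite /adj ab (subsetP FE). Qed.

Lemma max_acyclic E F : simple_graph E -> ~~ has_cycle E -> F \subset E ->
  connectedb F -> E \subset F.
Proof.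
move=> sE aE FE cF; apply/subsetP => e eE.
have /cards2P[a [b [ab ee]]] : #|e| == 2 by move/forallP: sE => /(_ e); rewrite eE.
subst e; apply/negPn/negP => nF.
have : connect (adj F) a b by move/forallP: cF => /(_ a) /forallP /(_ b).
case/connectP => s0 ps0 lb; subst b; move: ab nF eE; case: (shortenP ps0) => s ps us _ ab nF eE.
move/negP: aE; apply; apply/existsP.
have hs : size (a :: s) < N.+1.
  by rewrite ltnS -(card_uniqP us); apply: (leq_trans (max_card _)); rewrite card_ord.
have s2 : 2 < size (a :: s).
  case: s ps us ab nF {hs eE} => [|y [|z s']] //=; first by rewrite eqxx.
  by move=> /andP[/andP[_ h] _] _ _; rewrite h.
exists (Ordinal hs); apply/existsP; exists (in_tuple (a :: s)); apply/and3P; split => //.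
- rewrite /= rcons_path (sub_path (adj_sub FE) ps) /= /adj eq_sym ab /=.
  by rewrite setUC.
Qed.


Fixpoint ball E r k : {set V} :=
  if k is k'.+1 then ball E r k' :|: [set v | [exists u in ball E r k', adj E v u]]
  else [set r].

Lemma Ep_surj E r : is_tree E -> exists2 p, rooted r p & Ep p r = E.
Proof.
case/and3P => sE cE aE.
have hex v : exists k, v \in ball E r k.
  have : connect (adj E) v r by move/forallP: cE => /(_ v) /forallP /(_ r).
  case/connectP => s ps lb.
  elim: s v ps lb => [|y s IH] v /=; first by move=> _ ->; exists 0; rewrite inE.
  case/andP => vy ps lb; have [k hk] := IH y ps lb; exists k.+1.
  rewrite /= inE; apply/orP; right; rewrite inE; apply/existsP; exists y; by rewrite hk vy.
pose lvl v := ex_minn (hex v).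
have lvlP v : v \in ball E r (lvl v) /\ forall k, v \in ball E r k -> lvl v <= k.
  by rewrite /lvl; case: ex_minnP.
have hpar v : v != r -> exists u, adj E v u && (lvl u < lvl v).
  move=> vr; case: (lvlP v); case e: (lvl v) => [|k] h1 h2.
    by rewrite /= inE (negbTE vr) in h1.
  rewrite /= inE in h1; case/orP: h1 => [h|]; first by have := h2 k h; lia.
  rewrite inE => /existsP[u /andP[uk huv]]; exists u; rewrite huv /=.
  by have := (lvlP u).2 k uk; lia.
pose p := [ffun v => if v == r then r else odflt r [pick u | adj E v u && (lvl u < lvl v)]].
have hp v : v != r -> adj E v (p v) && (lvl (p v) < lvl v).
  move=> vr; rewrite /p ffunE (negbTE vr); case: pickP => [u hu //|none].
  by have [u hu] := hpar v vr; rewrite none in hu.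
have rp : rooted r p.
  apply/rootedP; split; first by rewrite /p ffunE eqxx.
  suff H : forall n v, lvl v <= n -> exists m, iter m p v = r.
    by move=> v; apply: (H (lvl v)).
  elim=> [|n IH] v hv; (case: (eqVneq v r) => [->|vr]; first by exists 0).
    by have := hp v vr; lia.
  have [m hm] : exists m, iter m p (p v) = r.
    by apply: IH; move/andP: (hp v vr) => [_]; lia.
  by exists m.+1; rewrite iterSr.
have sub : Ep p r \subset E.
  apply/subsetP => e /imsetP[v]; rewrite !inE => vr ->.
  by case/andP: (hp v vr) => /andP[_ h] _.
exists p => //; apply/eqP; rewrite eqEsubset sub /=.
apply: max_acyclic => //.
by have := Ep_tree rp => /and3P[_ h _].
Qed.

End Trees.


Lemma sum_split (T : finType) (L H : {set T}) (G : {set T} -> nat) : [disjoint L & H] ->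
  \sum_(S in powerset (L :|: H)) G S =
  \sum_(A in powerset L) \sum_(B in powerset H) G (A :|: B).
Proof.
move=> dLH.
have LHf v : v \in L -> v \in H -> False.
  by move=> vL vH; move/disjointFr: dLH => /(_ v vL); rewrite vH.
rewrite (partition_big (fun S => S :&: L) (mem (powerset L))) /=; last first.
  by move=> S _; rewrite powersetE subsetIr.
apply: eq_bigr => A; rewrite powersetE => AL.
rewrite (reindex_onto (fun B => A :|: B) (fun S => S :&: H)) /=; last first.
  move=> S /andP[]; rewrite powersetE => /subsetP SLH /eqP SA.
  apply/setP => v; rewrite !inE -SA !inE.
  case vS: (v \in S) => //=; have := SLH v vS; rewrite inE.
  by case: (v \in L); case: (v \in H).
apply: eq_bigl => B; rewrite !powersetE.
apply/idP/idP.
  case/andP => _ /eqP <-; exact: subsetIr.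
move=> /subsetP BH; apply/andP; split; [apply/andP; split|].
- apply/subsetP => v; rewrite !inE => /orP[/(subsetP AL)->//|/BH ->]; by rewrite orbT.
- apply/eqP/setP => v; rewrite !inE.
  case vA: (v \in A); first by rewrite (subsetP AL v vA).
  case vB: (v \in B) => //=; case vL: (v \in L) => //.
  by case: (LHf v vL (BH v vB)).
- apply/eqP/setP => v; rewrite !inE.
  case vB: (v \in B); first by rewrite (BH v vB) orbT.
  rewrite orbF; case vA: (v \in A) => //=; apply/negP => vH.
  exact: (LHf v (subsetP AL v vA) vH).
Qed.

Lemma sum_ind (m k : nat) (F : nat -> nat) :
  \sum_(a < m) (if (a : nat) == k then F a else 0) = if k < m then F k else 0.
Proof.
elim: m => [|m IH]; first by rewrite big_ord0.
rewrite big_ord_recr /= IH.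
case: (ltngtP k m) => [km|mk|<-].
- by rewrite addn0 ltnS ltnW.
- by rewrite ltnS leqNgt mk.
- by rewrite add0n ltnSn.
Qed.

Section Count.
Variables (N : nat) (r : 'I_N).

Definition Wr := ~: [set r].
Definition Lr := [set v : 'I_N | v < r].
Definition Hr := [set v : 'I_N | r < v].

Lemma sc_Ep p : rooted r p -> small_children (Ep p r) r = #|fib Wr r p :&: Lr|.
Proof.
move=> rp; rewrite /small_children; apply: eq_card => v.
rewrite !inE adj_Ep eqxx /= eq_sym.
case: (eqVneq v r) => //= vr; by rewrite eq_sym andbC.
Qed.

Lemma count1 k : #|[set E | is_tree E && (small_children E r == k)]| =
  #|[set p in Fun [set r] Wr | #|fib Wr r p :&: Lr| == k]|.
Proof.
rewrite -[RHS](@card_in_imset _ _ (fun p => Ep p r)); last first.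
  move=> p q; rewrite !inE => /andP[rp _] /andP[rq _]; exact: Ep_inj.
apply: eq_card => E; rewrite inE; apply/andP/imsetP.
  case=> tE /eqP sc; have [p rp ep] := Ep_surj r tE; exists p => //.
  by rewrite !inE; apply/andP; split=> //; rewrite -sc_Ep // ep sc.
case=> p; rewrite !inE => /andP[rp /eqP h] ->.
by split; [exact: Ep_tree | rewrite sc_Ep // h].
Qed.

Lemma count2 k : #|[set p in Fun [set r] Wr | #|fib Wr r p :&: Lr| == k]| =
  \sum_(S in powerset Wr) (if #|S :&: Lr| == k then Fc #|S| (#|Wr| - #|S|) else 0).
Proof.
rewrite -sum1_card (partition_big (fib Wr r) (mem (powerset Wr))) /=; last first.
  by move=> p _; rewrite powersetE; apply/subsetP => w; rewrite inE => /andP[].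
apply: eq_bigr => S; rewrite powersetE => SW.
have dr : [disjoint [set r] & Wr].
  by rewrite disjoint_sym disjoint_subset; apply/subsetP => v; rewrite !inE.
case: eqP => hk.
  rewrite sum1dep_card.
  transitivity #|[set p in Fun [set r] Wr | fib Wr r p == S]|.
    apply: eq_card => p; rewrite !inE -andbA; case: (eqVneq (fib Wr r p) S) => [->|ne]; [by rewrite hk !eqxx | by rewrite !andbF].
  rewrite (fib_card dr (set11 r) SW).
  rewrite card_Fun.
    have -> : [set r] :\ r :|: S = S by apply/setP => v; rewrite !inE; case: (v == r).
    by rewrite cardsD (setIidPr SW).
  apply: disj_intro => v; rewrite !inE => /orP[/andP[/negP h /eqP]//|vS]. 
  by rewrite vS.
apply: big1 => p /andP[]; rewrite inE => /andP[_ /eqP h] /eqP e.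
by rewrite e in h.
Qed.


Lemma WLH : Wr = Lr :|: Hr.
Proof. by apply/setP => v; rewrite !inE -val_eqE neq_ltn. Qed.

Lemma dLH : [disjoint Lr & Hr].
Proof. by apply: disj_intro => v; rewrite !inE; lia. Qed.

Lemma count3 k :
  \sum_(S in powerset Wr) (if #|S :&: Lr| == k then Fc #|S| (#|Wr| - #|S|) else 0) =
  'C(#|Lr|, k) * \sum_(t < #|Hr|.+1) 'C(#|Hr|, t) * Fc (k + t) (#|Wr| - (k + t)).
Proof.
set w := #|Wr|; rewrite WLH (sum_split _ dLH).
transitivity (\sum_(A in powerset Lr) (if #|A| == k then
   \sum_(t < #|Hr|.+1) 'C(#|Hr|, t) * Fc (#|A| + t) (w - (#|A| + t)) else 0)).
  apply: eq_bigr => A; rewrite powersetE => AL.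
  rewrite (eq_bigr (fun B : {set 'I_N} => if #|A| == k then Fc (#|A| + #|B|) (w - (#|A| + #|B|)) else 0)); last first.
    move=> B; rewrite powersetE => BH.
    have hAB : A :&: B = set0.
      apply/setP => v; rewrite !inE; apply/negP => /andP[vA vB].
      have := subsetP AL v vA; have := subsetP BH v vB; rewrite !inE; lia.
    have -> : (A :|: B) :&: Lr = A.
      apply/setP => v; rewrite !inE.
      case vA: (v \in A); first by have := subsetP AL v vA; rewrite inE => ->.
      case vB: (v \in B) => //=; have := subsetP BH v vB; rewrite !inE; lia.
    by rewrite cardsU hAB cards0 subn0.
  case: eqP => _; last by rewrite big1.
  exact: (sum_powerset Hr (fun t => Fc (#|A| + t) (w - (#|A| + t)))).
rewrite (sum_powerset Lr (fun a => if a == k then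
   \sum_(t < #|Hr|.+1) 'C(#|Hr|, t) * Fc (a + t) (w - (a + t)) else 0)).
rewrite (eq_bigr (fun a : 'I_#|Lr|.+1 => if (a : nat) == k then 'C(#|Lr|, a) *
   \sum_(t < #|Hr|.+1) 'C(#|Hr|, t) * Fc (a + t) (w - (a + t)) else 0)); last first.
  by move=> a _; case: eqP; rewrite ?muln0.
rewrite (sum_ind _ k (fun a => 'C(#|Lr|, a) * \sum_(t < #|Hr|.+1) 'C(#|Hr|, t) * Fc (a + t) (w - (a + t)))); case: ifP => // hk.
by rewrite bin_small ?mul0n // ltnNge -ltnS hk.
Qed.


Lemma cardL : #|Lr| = r.
Proof.
have le : r <= N by apply: ltnW.
have -> : Lr = (widen_ord le) @: [set: 'I_r].
  apply/setP => v; rewrite !inE; apply/idP/imsetP => [h|[j _ ->]]; last by rewrite /= ltn_ord.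
  by exists (Ordinal h) => //; apply: val_inj.
rewrite card_imset ?cardsT ?card_ord //.
by move=> a b /(congr1 val) /= /val_inj.
Qed.

Lemma cardW : #|Wr| = N.-1.
Proof. have := cardsC [set r]; rewrite cards1 card_ord /Wr => e; rewrite -[in RHS]e /=; lia. Qed.

Lemma cardH : #|Hr| = N.-1 - r.
Proof.
have := cardW; rewrite WLH cardsU cardL.
have -> : Lr :&: Hr = set0 by apply: disjoint_setI0; exact: dLH.
by rewrite cards0 subn0 => <-; rewrite addKn.
Qed.

Lemma count_all k : #|[set E | is_tree E && (small_children E r == k)]| =
  'C(r, k) * \sum_(t < (N.-1 - r).+1) 'C(N.-1 - r, t) * Fc (k + t) (N.-1 - (k + t)).
Proof. by rewrite count1 count2 count3 cardL cardH cardW. Qed.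

End Count.


Lemma S3 a k x : \sum_(t < a.+1) 'C(a, t) * ((k + t) * x ^ (a - t)) =
  k * (x + 1) ^ a + a * (x + 1) ^ a.-1.
Proof.
rewrite -S1 -S2 big_distrr -big_split /=; apply: eq_bigr => t _; lia.
Qed.

Local Open Scope ring_scope.

Lemma Fc_rat (s m : nat) : (s <= m)%N -> (0 < m)%N ->
  ((Fc s (m - s))%:R : rat) = s%:R * (m%:R) ^ (m%:Z - s%:Z - 1).
Proof.
move=> sm m0; have mn0 : (m%:R : rat) != 0 by rewrite pnatr_eq0 -lt0n.
rewrite /Fc; case: eqP => h.
  have -> : s = m by lia.
  have -> : m%:Z - m%:Z - 1 = -1 by rewrite subrr sub0r.
  by rewrite exprN1 mulfV.
have -> : m%:Z - s%:Z - 1 = ((m - s).-1)%N%:Z by lia.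
by rewrite -exprnP natrM natrX subnKC.
Qed.

Lemma term_eq (n i k a t : nat) : (0 < n)%N -> (1 <= i)%N -> (i <= n.+1)%N ->
  (k <= i.-1)%N -> a = (n - i.-1)%N -> (t <= a)%N ->
  ((('C(a, t) * Fc (k + t) (n - (k + t)))%N)%:R : rat) =
  (('C(a, t) * ((k + t) * n ^ (a - t)))%N)%:R * (n%:R : rat) ^ (i%:Z - k%:Z - 2).
Proof.
move=> n0 i1 i2 hk ha ht.
have mn0 : (n%:R : rat) != 0 by rewrite pnatr_eq0 -lt0n.
rewrite natrM Fc_rat; [|lia|lia].
rewrite !natrM natrX exprnP -!mulrA -expfzDr //; congr (_ * (_ * _ ^ _)).
lia.
Qed.


Unset Implicit Arguments.

Theorem mainTheorem4 (n i k : nat) (hn : (1 <= n)%N) (hi1 : (1 <= i)%N)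
    (hi2 : (i <= n.+1)%N) (r : 'I_n.+1) (hr : val r = i.-1) :
  (#|[set E : {set {set 'I_n.+1}} | is_tree E && (small_children E r == k)]|%:R : rat)
  = ('C(i.-1, k))%:R
    * ((k.+1 * n.+1)%:Z - i%:Z)%:~R
    * (n%:R : rat) ^ (i%:Z - k%:Z - 2)
    * (n.+1%:R : rat) ^ (n%:Z - i%:Z).
Proof.
rewrite (count_all r k) /= hr.
case: (ltnP i.-1 k) => hk.
  by rewrite bin_small // !mul0n !mul0r.
set a := (n - i.-1)%N.
rewrite natrM natr_sum.
rewrite (eq_bigr (fun t : 'I_a.+1 => ((('C(a, t) * ((k + t) * n ^ (a - t)))%N)%:R *
   (n%:R : rat) ^ (i%:Z - k%:Z - 2)))); last first.
  move=> t _; apply: term_eq => //; have := ltn_ord t; lia.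
rewrite -big_distrl /= -natr_sum S3.
have key : ((k * (n + 1) ^ a + a * (n + 1) ^ a.-1)%N%:R : rat) =
    ((k.+1 * n.+1)%:Z - i%:Z)%:~R * (n.+1%:R : rat) ^ (n%:Z - i%:Z).
  have n10 : (n.+1%:R : rat) != 0 by rewrite pnatr_eq0.
  case ea: a => [|a'].
    have ei : i = n.+1 by rewrite /a in ea; lia.
    have -> : n%:Z - i%:Z = -1 by rewrite ei; lia.
    have -> : (k.+1 * n.+1)%:Z - i%:Z = (k * n.+1)%N%:Z by rewrite ei; lia.
    rewrite exprN1 -natz mulrz_nat natrM -mulrA mulfV // mulr1.
    by rewrite expn0 muln1 mul0n addn0.
  have -> : n%:Z - i%:Z = a'%:Z by rewrite /a in ea; lia.
  have -> : (k.+1 * n.+1)%:Z - i%:Z = (k * n.+1 + a'.+1)%N%:Z by rewrite /a in ea; lia.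
  rewrite -exprnP -natz mulrz_nat -natrX -natrM; congr (_%:R).
  rewrite /= addn1 expnS; ring.
rewrite key; ring.
Qed.
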